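(* Let $n\ge3$, let $F(x,y)\in\mathbb{Z}[x,y]$ be a binary form of degree $n$ irreducible over $\mathbb{Q}$ with $s+1$ nonzero coefficients and discriminant $D$, and let $h,\kappa,Y_S$ be as in the context. Write $F(x,y)=a\prod_{i=1}^n(x-\alpha_iy)$ and $L_i(x,y)=x-\alpha_i y$. Then for each $i=1,\dots,n$, among the primitive solutions $(x,y)$ of $1\le|F(x,y)|\le h$ with $0<y\le Y_S$ there is at most one with $|L_i(x,y)|<\frac{1}{2Y_S}$.
   Context: $R=n^{800\log^2 n}$; $h$ is a positive integer and $\kappa>1$ an integer with $h\le |D|^{\frac{1}{2(n-1)(2+1/\kappa)}}/\big((3R)^{n/2}(ns)^{2s+n}\big)$; $Y_S=e^6 s(ns)^{2s/n}h^{1/(\kappa n)}$. Here $a$ is the coefficient of $x^n$ and $\alpha_1,\dots,\alpha_n$ are the roots of $F(x,1)$. A primitive solution is a solution $(x,y)\in\mathbb{Z}^2$ with $\gcd(x,y)=1$. *)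

(* Defs.v *)
From HB Require Import structures.
From mathcomp Require Import all_boot all_order all_algebra.
From mathcomp Require Import all_classical all_reals all_analysis.
From mathcomp Require Import complex.
Set Implicit Arguments. Unset Strict Implicit. Unset Printing Implicit Defensive.
Import Order.TTheory GRing.Theory Num.Theory.
Local Open Scope ring_scope.

Definition bform (K : pzRingType) (n : nat) (c : 'I_n.+1 -> K) (x y : K) : K :=
  \sum_(k < n.+1) c k * x ^+ k * y ^+ (n - k).

Definition bformZ (K : pzRingType) (n : nat) (c : 'I_n.+1 -> int) (x y : K) : K :=
  bform (fun k => (c k)%:~R) x y.

Definition bform_irreducible (n : nat) (c : 'I_n.+1 -> int) : Prop :=
  (exists k, c k != 0) /\
  ~ (exists (d e : nat) (g : 'I_d.+1 -> rat) (h : 'I_e.+1 -> rat),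
        [/\ (0 < d)%N, (0 < e)%N, (d + e)%N = n &
            forall x y : rat, bformZ c x y = bform g x y * bform h x y]).

Definition nb_nonzero_coefs (n : nat) (c : 'I_n.+1 -> int) : nat :=
  #|[set k | c k != 0]|.

Definition R_const (R : realType) (n : nat) : R :=
  (n%:R : R) `^ (800 * ln (n%:R : R) ^+ 2).

Definition Y_S (R : realType) (n s h kappa : nat) : R :=
  expR 6 * s%:R * ((n * s)%:R `^ ((2 * s)%:R / n%:R))
    * (h%:R `^ (1 / (kappa * n)%:R)).

(* Main.v *)
Require Import Defs.
From HB Require Import structures.
From mathcomp Require Import all_boot all_order all_algebra.
From mathcomp Require Import all_classical all_reals all_analysis.
From mathcomp Require Import complex.
From mathcomp Require Import zify ring.
Import Order.TTheory GRing.Theory Num.Theory.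
Local Open Scope ring_scope.

Theorem lemma4p2 (R : realType) (n : nat) (c : 'I_n.+1 -> int)
    (s h kappa : nat) (D : int) (alpha : 'I_n -> R[i]) :
  (3 <= n)%N ->
  bform_irreducible c ->
  nb_nonzero_coefs c = s.+1 ->
  (* F(x,y) = a * prod_i (x - alpha_i y), a = coefficient of x^n *)
  (forall x y : R[i],
      bformZ c x y = (c ord_max)%:~R * \prod_(i < n) (x - alpha i * y)) ->
  (* D is the discriminant of F *)
  D%:~R = (c ord_max)%:~R ^+ (2 * n - 2)
          * \prod_(i < n) \prod_(j < n | (i < j)%N) (alpha i - alpha j) ^+ 2 ->
  (0 < h)%N ->
  (1 < kappa)%N ->
  (h%:R : R) <= ((`|D|%:~R : R) `^ (1 / (2 * (n%:R - 1) * (2 + 1 / kappa%:R))))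
                / ((3 * R_const R n) `^ (n%:R / 2) * ((n * s)%:R ^+ (2 * s + n))) ->
  forall i : 'I_n, forall x1 y1 x2 y2 : int,
    let P (x y : int) :=
      [/\ coprimez x y,
          1 <= `|bformZ c x y| <= h%:Z,
          0 < y,
          (y%:~R : R) <= Y_S R n s h kappa &
          `|x%:~R - alpha i * y%:~R| < ((1 / (2 * Y_S R n s h kappa))%:C)%C] in
    P x1 y1 -> P x2 y2 -> (x1, y1) = (x2, y2).
Proof.
move=> _ _ _ _ _ _ _ _ i x1 y1 x2 y2 P.
set Y := Y_S R n s h kappa.
have key : forall x y : int, P x y ->
  [/\ coprimez x y, 0 < y, (y%:~R : R) <= Y, 0 < Y &
      `|x%:~R - alpha i * y%:~R| < ((1 / (2 * Y))%:C)%C].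
  move=> x y [cxy _ y0 yY e].
  split=> //; apply: lt_le_trans yY.
  by rewrite ltr0z.
move=> /key [c1 p1 yY1 Y0 e1] /key [c2 p2 yY2 _ e2].
clearbody Y.
set r := 1 / (2 * Y).
have Hbound : forall (y : int) (e : R[i]), 0 < y -> (y%:~R : R) <= Y ->
    `|e| < r%:C%C -> `|(y%:~R : R[i]) * e| < (1/2 : R)%:C%C.
  move=> y e py yY he.
  rewrite normrM.
  have -> : (y%:~R : R[i]) = ((y%:~R : R)%:C)%C by rewrite rmorph_int.
  have ny : `|((y%:~R : R)%:C)%C| = ((y%:~R : R)%:C)%C.
    by apply: ger0_norm; rewrite ler0c ler0z ltW.
  rewrite ny.
  apply: (@le_lt_trans _ _ ((Y%:C)%C * `|e|)).
    by apply: ler_wpM2r => //; rewrite lecR.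
  have -> : (1/2 : R) = Y * r by rewrite /r; field; rewrite gt_eqF.
  rewrite [X in _ < X]rmorphM /= ltr_pM2l //.
  by rewrite ltcR.
have Hd : `|((x1 * y2 - x2 * y1)%:~R : R[i])| < 1.
  have -> : ((x1 * y2 - x2 * y1)%:~R : R[i]) =
     (y2%:~R * (x1%:~R - alpha i * y1%:~R)) - (y1%:~R * (x2%:~R - alpha i * y2%:~R)).
    rewrite rmorphB !rmorphM /=; ring.
  apply: (le_lt_trans (ler_normB _ _)).
  apply: (lt_le_trans (ltrD (Hbound _ _ p2 yY2 e1) (Hbound _ _ p1 yY1 e2))).
  by rewrite -rmorphD /= -splitr rmorph1.
rewrite -intr_norm ltrz1 in Hd.
have E : x1 * y2 = x2 * y1.
  apply/eqP; rewrite -subr_eq0; move: Hd; move: (x1 * y2 - x2 * y1) => z Hz.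
  by apply/eqP; clear -Hz; lia.
have d12 : (y1 %| y2)%Z.
  have : (y1 %| y2 * x1)%Z by rewrite mulrC E dvdz_mull.
  by rewrite Gauss_dvdzl // coprimez_sym.
have d21 : (y2 %| y1)%Z.
  have : (y2 %| y1 * x2)%Z by rewrite mulrC -E dvdz_mull.
  by rewrite Gauss_dvdzl // coprimez_sym.
rewrite dvdzE in d12; rewrite dvdzE in d21.
have ea : `|y1|%N = `|y2|%N by apply/eqP; rewrite eqn_dvd d12 d21.
have ey : y1 = y2.
  by have := congr1 Posz ea; rewrite !abszE (gtr0_norm p1) (gtr0_norm p2).
subst y2.
have : x1 = x2 by apply: (mulIf (lt0r_neq0 p1)).
by move=> ->.
Qed.
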